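(* Let $A=(A,\wedge,\vee,\cdot,\to,1)$ be a $\mathsf{DLCMI}$ and $a,b\in A$. Then $(a,b)\in R(a,b)$, and $R(a,b)$ is a congruence of the lattice reduct $(A,\wedge,\vee)$ of $A$.
   Context: An algebra $(A,\wedge,\vee,\cdot,\to,1)$ of type $(2,2,2,2,0)$ is a $\mathsf{DLCMI}$ if for all $a,b,c\in A$: (1) $(A,\wedge,\vee)$ is a distributive lattice; (2) $1$ is its largest element; (3) $(A,\cdot,1)$ is a commutative monoid; (4) $(a\to b)\wedge(a\to c)=a\to(b\wedge c)$; (5) $(a\to c)\wedge(b\to c)=(a\vee b)\to c$; (6) $a\to a=1$; (7) $(a\vee b)\cdot c=(a\cdot c)\vee(b\cdot c)$; (8) $(a\to b)\cdot(b\to c)\le a\to c$; (9) $a\to b\le (a\cdot c)\to(b\cdot c)$. Notation: $x^0=1$, $x^{m}=x\cdot x^{m-1}$; $\square(x)=1\to x$, $\square^0(x)=x$, $\square^{m}$ the $m$-fold iterate; $x\leftrightarrow y=(x\to y)\wedge(y\to x)$; $t_n(a,b)=\square^0(a\leftrightarrow b)\wedge\square(a\leftrightarrow b)\wedge\cdots\wedge\square^n(a\leftrightarrow b)$; $t_n^k(a,b)=(t_n(a,b))^k$. $R(a,b)$ is the binary relation on $A$ with $(c,d)\in R(a,b)$ iff there exist natural numbers $n,k$ such that (C1) $t_n^k(a,b)\cdot(c\wedge a\wedge b)\le d\wedge a\wedge b$ and $t_n^k(a,b)\cdot(d\wedge a\wedge b)\le c\wedge a\wedge b$; (C2) $t_n^k(a,b)\cdot(c\vee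 a\vee b)\le d\vee a\vee b$ and $t_n^k(a,b)\cdot(d\vee a\vee b)\le c\vee a\vee b$; (C3) $t_n^k(a,b)\le c\leftrightarrow d$. *)

(* Defs.v *)
From Stdlib Require Import PeanoNat.

Record DLCMI := {
  car :> Type;
  meet : car -> car -> car;
  join : car -> car -> car;
  mul  : car -> car -> car;
  imp  : car -> car -> car;
  one  : car;
  meetC : forall x y, meet x y = meet y x;
  joinC : forall x y, join x y = join y x;
  meetA : forall x y z, meet x (meet y z) = meet (meet x y) z;
  joinA : forall x y z, join x (join y z) = join (join x y) z;
  meet_absorb : forall x y, meet x (join x y) = x;
  join_absorb : forall x y, join x (meet x y) = x;
  distr : forall x y z, meet x (join y z) = join (meet x y) (meet x z);
  le_one : forall x, meet x one = x;
  mulA : forall x y z, mul x (mul y z) = mul (mul x y) z;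
  mulC : forall x y, mul x y = mul y x;
  mul1 : forall x, mul x one = x;
  ax4 : forall x y z, meet (imp x y) (imp x z) = imp x (meet y z);
  ax5 : forall x y z, meet (imp x z) (imp y z) = imp (join x y) z;
  ax6 : forall x, imp x x = one;
  ax7 : forall x y z, mul (join x y) z = join (mul x z) (mul y z);
  ax8 : forall x y z, meet (mul (imp x y) (imp y z)) (imp x z) = mul (imp x y) (imp y z);
  ax9 : forall x y z, meet (imp x y) (imp (mul x z) (mul y z)) = imp x y
}.

Arguments meet {_}. Arguments join {_}. Arguments mul {_}. Arguments imp {_}.
Arguments one {_}.

Definition le {A : DLCMI} (x y : A) : Prop := meet x y = x.

Fixpoint pow {A : DLCMI} (x : A) (m : nat) : A :=
  match m with 0 => one | S m' => mul x (pow x m') end.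

Definition box {A : DLCMI} (x : A) : A := imp one x.
Definition boxn {A : DLCMI} (m : nat) (x : A) : A := Nat.iter m box x.

Definition biimp {A : DLCMI} (x y : A) : A := meet (imp x y) (imp y x).

Fixpoint tn {A : DLCMI} (n : nat) (a b : A) : A :=
  match n with
  | 0 => boxn 0 (biimp a b)
  | S n' => meet (tn n' a b) (boxn (S n') (biimp a b))
  end.

Definition tnk {A : DLCMI} (n k : nat) (a b : A) : A := pow (tn n a b) k.

Definition R {A : DLCMI} (a b : A) (c d : A) : Prop :=
  exists n k : nat,
    (le (mul (tnk n k a b) (meet c (meet a b))) (meet d (meet a b)) /\
     le (mul (tnk n k a b) (meet d (meet a b))) (meet c (meet a b))) /\
    (le (mul (tnk n k a b) (join c (join a b))) (join d (join a b)) /\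
     le (mul (tnk n k a b) (join d (join a b))) (join c (join a b))) /\
    le (tnk n k a b) (biimp c d).

Definition lattice_congruence {A : DLCMI} (Rel : A -> A -> Prop) : Prop :=
  (forall x, Rel x x) /\
  (forall x y, Rel x y -> Rel y x) /\
  (forall x y z, Rel x y -> Rel y z -> Rel x z) /\
  (forall x y x' y', Rel x y -> Rel x' y' -> Rel (meet x x') (meet y y')) /\
  (forall x y x' y', Rel x y -> Rel x' y' -> Rel (join x x') (join y y')).

(* Main.v *)
Require Import Defs.
From Stdlib Require Import PeanoNat Lia.

Section L.
Variable A : DLCMI.
Implicit Types x y z u v c t s : A.

Lemma le_refl x : le x x.
Proof. unfold le. rewrite <- (join_absorb A x x) at 2. apply meet_absorb. Qed.

Lemma meet_idem x : meet x x = x.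
Proof. apply le_refl. Qed.

Lemma le_join x y : le x y <-> join x y = y.
Proof. unfold le; split; intro H.
- rewrite <- H, joinC, meetC. apply join_absorb.
- rewrite <- H. apply meet_absorb. Qed.

Lemma le_trans x y z : le x y -> le y z -> le x z.
Proof. unfold le; intros H1 H2. rewrite <- H1, <- meetA, H2. reflexivity. Qed.

Lemma le_antisym x y : le x y -> le y x -> x = y.
Proof. unfold le; intros H1 H2. rewrite <- H1, meetC. exact H2. Qed.

Lemma meet_l x y : le (meet x y) x.
Proof. unfold le. rewrite (meetC _ x y), <- meetA, meet_idem. reflexivity. Qed.
Lemma meet_r x y : le (meet x y) y.
Proof. unfold le. rewrite <- meetA, meet_idem. reflexivity. Qed.
Lemma meet_glb x y z : le x y -> le x z -> le x (meet y z).
Proof. unfold le; intros H1 H2. rewrite meetA, H1, H2. reflexivity. Qed.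
Lemma join_l x y : le x (join x y).
Proof. apply meet_absorb. Qed.
Lemma join_r x y : le y (join x y).
Proof. rewrite joinC. apply join_l. Qed.
Lemma join_lub x y z : le x z -> le y z -> le (join x y) z.
Proof. rewrite !le_join; intros H1 H2. rewrite <- joinA, H2, H1. reflexivity. Qed.
Lemma le_top x : le x one.
Proof. apply le_one. Qed.

Lemma meet_mono x y u v : le x u -> le y v -> le (meet x y) (meet u v).
Proof. intros; apply meet_glb; eapply le_trans; [apply meet_l|assumption|apply meet_r|assumption]. Qed.
Lemma join_mono x y u v : le x u -> le y v -> le (join x y) (join u v).
Proof. intros; apply join_lub; (eapply le_trans; [eassumption|]); [apply join_l|apply join_r]. Qed.

Lemma mul_mono_l x y z : le x y -> le (mul x z) (mul y z).
Proof. rewrite le_join; intro H. rewrite <- H. rewrite ax7. apply join_l. Qed.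
Lemma mul_mono x y u v : le x u -> le y v -> le (mul x y) (mul u v).
Proof. intros H1 H2. eapply le_trans. apply mul_mono_l, H1.
  rewrite (mulC _ u y), (mulC _ u v). apply mul_mono_l, H2. Qed.
Lemma mul_le_l x y : le (mul x y) x.
Proof. rewrite <- (mul1 _ x) at 2. apply mul_mono; [apply le_refl|apply le_top]. Qed.
Lemma mul_le_r x y : le (mul x y) y.
Proof. rewrite mulC. apply mul_le_l. Qed.

Lemma imp_mono_r x y z : le y z -> le (imp x y) (imp x z).
Proof. unfold le; intro H. rewrite ax4, H. reflexivity. Qed.
Lemma imp_anti_l u v z : le u v -> le (imp v z) (imp u z).
Proof. rewrite le_join; intro H. unfold le. rewrite meetC, ax5, H. reflexivity. Qed.
Lemma imp_trans x y z : le (mul (imp x y) (imp y z)) (imp x z).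
Proof. unfold le. apply ax8. Qed.

Lemma distr_le x y c : le (meet (join x c) (join y c)) (join (meet x y) c).
Proof.
  rewrite distr. apply join_lub.
  - rewrite meetC, distr. apply join_mono. rewrite (meetC _ y x); apply le_refl. apply meet_r.
  - eapply le_trans; [apply meet_r|apply join_r].
Qed.
Lemma distr_le2 c x y : le (meet c (join x y)) (join (meet x c) (meet y c)).
Proof. rewrite distr, (meetC _ c x), (meetC _ c y). apply le_refl. Qed.

Lemma pow_add x k m : pow x (k + m) = mul (pow x k) (pow x m).
Proof. induction k; simpl. rewrite mulC, mul1; reflexivity. rewrite IHk, mulA; reflexivity. Qed.
Lemma pow_mono x y k : le x y -> le (pow x k) (pow y k).
Proof. intro H; induction k; simpl. apply le_refl. apply mul_mono; auto. Qed.
Lemma tn_anti n m (a b : A) : le (tn (n + m) a b) (tn n a b).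
Proof. induction m. rewrite Nat.add_0_r; apply le_refl.
  rewrite Nat.add_succ_r. simpl. eapply le_trans; [apply meet_l|exact IHm]. Qed.

Lemma tnk_le n1 k1 n2 k2 (a b : A) :
  le (tnk (n1 + n2) (k1 + k2) a b) (mul (tnk n1 k1 a b) (tnk n2 k2 a b)).
Proof. unfold tnk. rewrite pow_add. apply mul_mono; apply pow_mono.
  apply tn_anti. rewrite Nat.add_comm. apply tn_anti. Qed.
Lemma tnk_le1 n1 k1 n2 k2 (a b : A) : le (tnk (n1 + n2) (k1 + k2) a b) (tnk n1 k1 a b).
Proof. eapply le_trans. apply tnk_le. apply mul_le_l. Qed.
Lemma tnk_le2 n1 k1 n2 k2 (a b : A) : le (tnk (n1 + n2) (k1 + k2) a b) (tnk n2 k2 a b).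
Proof. eapply le_trans. apply tnk_le. apply mul_le_r. Qed.

Lemma mul_ge t s x y : le t s -> le (mul s x) y -> le (mul t x) y.
Proof. intros H1 H2. eapply le_trans; [|exact H2]. apply mul_mono_l, H1. Qed.


Lemma mul_meet_le (t s1 s2 X1 X2 : A) : le t s1 -> le t s2 ->
  le (mul t (meet X1 X2)) (meet (mul s1 X1) (mul s2 X2)).
Proof. intros; apply meet_glb; apply mul_mono; auto; [apply meet_l|apply meet_r]. Qed.
Lemma mul_join_le (t s1 s2 X1 X2 : A) : le t s1 -> le t s2 ->
  le (mul t (join X1 X2)) (join (mul s1 X1) (mul s2 X2)).
Proof. intros. rewrite mulC, ax7, (mulC _ X1), (mulC _ X2).
  apply join_mono; apply mul_mono; auto; apply le_refl. Qed.
Lemma biimp_1 t x y : le t (biimp x y) -> le t (imp x y).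
Proof. intro H; eapply le_trans; [exact H|apply meet_l]. Qed.
Lemma biimp_2 t x y : le t (biimp x y) -> le t (imp y x).
Proof. intro H; eapply le_trans; [exact H|apply meet_r]. Qed.
End L.


Ltac lat := solve [ first [apply le_refl | apply le_top
  | apply meet_glb; lat | apply join_lub; lat
  | eapply le_trans; [apply meet_l|lat] | eapply le_trans; [apply meet_r|lat]
  | eapply le_trans; [|apply join_l]; lat | eapply le_trans;[|apply join_r]; lat ] ].

Theorem lemma3p6 (A : DLCMI) (a b : A) :
  R a b a b /\ lattice_congruence (R a b).
Proof.
  split; [|split; [|split; [|split; [|split]]]].
  - exists 0, 1. repeat split; try (eapply le_trans; [apply mul_le_r|lat]).
    unfold tnk; simpl. rewrite mul1. apply le_refl.
  - intro x. exists 0, 0. repeat split; try (eapply le_trans; [apply mul_le_r|lat]).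
    unfold biimp; rewrite ax6. lat.
  - intros x y (n&k&(H1&H2)&(H3&H4)&H5). exists n, k. repeat split; auto.
    unfold biimp in *. rewrite meetC. auto.
  - intros x y z (n1&k1&(H1&H2)&(H3&H4)&H5) (n2&k2&(G1&G2)&(G3&G4)&G5).
    exists (n1+n2), (k1+k2).
    assert (T12 : le (tnk (n1+n2) (k1+k2) a b) (mul (tnk n1 k1 a b) (tnk n2 k2 a b))) by apply tnk_le.
    assert (T21 : le (tnk (n1+n2) (k1+k2) a b) (mul (tnk n2 k2 a b) (tnk n1 k1 a b))) by (rewrite mulC; apply tnk_le).
    repeat split.
    + apply mul_ge with (1 := T21). rewrite <- mulA.
      eapply le_trans; [apply mul_mono; [apply le_refl|exact H1]|exact G1].
    + apply mul_ge with (1 := T12). rewrite <- mulA.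
      eapply le_trans; [apply mul_mono; [apply le_refl|exact G2]|exact H2].
    + apply mul_ge with (1 := T21). rewrite <- mulA.
      eapply le_trans; [apply mul_mono; [apply le_refl|exact H3]|exact G3].
    + apply mul_ge with (1 := T12). rewrite <- mulA.
      eapply le_trans; [apply mul_mono; [apply le_refl|exact G4]|exact H4].
    + apply meet_glb.
      * eapply le_trans; [exact T12|]. eapply le_trans; [|apply imp_trans with (y := y)].
        apply mul_mono; [apply biimp_1, H5|apply biimp_1, G5].
      * eapply le_trans; [exact T21|]. eapply le_trans; [|apply imp_trans with (y := y)].
        apply mul_mono; [apply biimp_2, G5|apply biimp_2, H5].
  - intros x y x' y' (n1&k1&(H1&H2)&(H3&H4)&H5) (n2&k2&(G1&G2)&(G3&G4)&G5).
    exists (n1+n2), (k1+k2).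
    pose proof (tnk_le1 _ n1 k1 n2 k2 a b) as T1.
    pose proof (tnk_le2 _ n1 k1 n2 k2 a b) as T2.
    repeat split.
    + eapply le_trans; [apply mul_mono; [apply le_refl|]|].
      2: eapply le_trans; [eapply (mul_meet_le _ _ _ _ _ _ T1 T2)|].
      2: eapply le_trans; [apply meet_mono; [exact H1|exact G1]|lat]. lat.
    + eapply le_trans; [apply mul_mono; [apply le_refl|]|].
      2: eapply le_trans; [eapply (mul_meet_le _ _ _ _ _ _ T1 T2)|].
      2: eapply le_trans; [apply meet_mono; [exact H2|exact G2]|lat]. lat.
    + eapply le_trans; [apply mul_mono; [apply le_refl|]|].
      2: eapply le_trans; [eapply (mul_meet_le _ _ _ _ _ _ T1 T2)|].
      2: eapply le_trans; [apply meet_mono; [exact H3|exact G3]|apply distr_le]. lat.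
    + eapply le_trans; [apply mul_mono; [apply le_refl|]|].
      2: eapply le_trans; [eapply (mul_meet_le _ _ _ _ _ _ T1 T2)|].
      2: eapply le_trans; [apply meet_mono; [exact H4|exact G4]|apply distr_le]. lat.
    + unfold biimp. rewrite <- !ax4. repeat apply meet_glb.
      * eapply le_trans; [exact T1|]. eapply le_trans; [apply biimp_1, H5|].
        apply imp_anti_l, meet_l.
      * eapply le_trans; [exact T2|]. eapply le_trans; [apply biimp_1, G5|].
        apply imp_anti_l, meet_r.
      * eapply le_trans; [exact T1|]. eapply le_trans; [apply biimp_2, H5|].
        apply imp_anti_l, meet_l.
      * eapply le_trans; [exact T2|]. eapply le_trans; [apply biimp_2, G5|].
        apply imp_anti_l, meet_r.
  - intros x y x' y' (n1&k1&(H1&H2)&(H3&H4)&H5) (n2&k2&(G1&G2)&(G3&G4)&G5).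
    exists (n1+n2), (k1+k2).
    pose proof (tnk_le1 _ n1 k1 n2 k2 a b) as T1.
    pose proof (tnk_le2 _ n1 k1 n2 k2 a b) as T2.
    repeat split.
    + eapply le_trans; [apply mul_mono; [apply le_refl|]|].
      2: eapply le_trans; [eapply (mul_join_le _ _ _ _ _ _ T1 T2)|].
      2: eapply le_trans; [apply join_mono; [exact H1|exact G1]|lat].
      eapply le_trans; [|apply distr_le2]. lat.
    + eapply le_trans; [apply mul_mono; [apply le_refl|]|].
      2: eapply le_trans; [eapply (mul_join_le _ _ _ _ _ _ T1 T2)|].
      2: eapply le_trans; [apply join_mono; [exact H2|exact G2]|lat].
      eapply le_trans; [|apply distr_le2]. lat.
    + eapply le_trans; [apply mul_mono; [apply le_refl|]|].
      2: eapply le_trans; [eapply (mul_join_le _ _ _ _ _ _ T1 T2)|].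
      2: eapply le_trans; [apply join_mono; [exact H3|exact G3]|lat]. lat.
    + eapply le_trans; [apply mul_mono; [apply le_refl|]|].
      2: eapply le_trans; [eapply (mul_join_le _ _ _ _ _ _ T1 T2)|].
      2: eapply le_trans; [apply join_mono; [exact H4|exact G4]|lat]. lat.
    + unfold biimp. rewrite <- !ax5. repeat apply meet_glb.
      * eapply le_trans; [exact T1|]. eapply le_trans; [apply biimp_1, H5|].
        apply imp_mono_r, join_l.
      * eapply le_trans; [exact T2|]. eapply le_trans; [apply biimp_1, G5|].
        apply imp_mono_r, join_r.
      * eapply le_trans; [exact T1|]. eapply le_trans; [apply biimp_2, H5|].
        apply imp_mono_r, join_l.
      * eapply le_trans; [exact T2|]. eapply le_trans; [apply biimp_2, G5|].
        apply imp_mono_r, join_r.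
Qed.
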